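(* There exist infinitely many distinct rational numbers $r>1$ such that, for each of them, there is a circle $(x-h)^2+y^2=a^2$ with $h,a\in\mathbb{Q}$, $a>0$, carrying four rational points $P_i=(x_i,y_i)$, $i=1,\dots,4$, none of which lies on the $x$-axis, with $x_i>0$ and $x_{i+1}=r\,x_i$ for $i=1,2,3$, and such that $P_1$ and $P_4$ are symmetric with respect to the diameter of the circle parallel to the $y$-axis, i.e. $x_1+x_4=2h$ and $y_1=y_4$.
   Context: Rational points are points with both coordinates in $\mathbb{Q}$. *)

(* Defs.v *)
From mathcomp Require Import all_boot all_order all_algebra.
Set Implicit Arguments. Unset Strict Implicit. Unset Printing Implicit Defensive.
Import Order.TTheory GRing.Theory Num.Theory.
Local Open Scope ring_scope.

Definition on_circle (h a x y : rat) : Prop := (x - h) ^+ 2 + y ^+ 2 = a ^+ 2.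

Definition good_ratio (r : rat) : Prop :=
  exists (h a : rat) (x y : 'I_4 -> rat),
    0 < a /\
    (forall i, on_circle h a (x i) (y i)) /\
    (forall i, y i != 0) /\
    (forall i, 0 < x i) /\
    (forall i : 'I_4, (i < 3)%N -> x (inord i.+1) = r * x i) /\
    x ord0 + x (inord 3) = 2 * h /\
    y ord0 = y (inord 3).

(* Main.v *)
Require Import Defs.
From mathcomp Require Import all_boot all_order all_algebra.
From mathcomp Require Import ring lra zify.
Import Order.TTheory GRing.Theory Num.Theory.
Local Open Scope ring_scope.


Definition fE (X : rat) : rat := X^+3 - 27 * X^+2 - 984 * X + 20 * 1333.
Definition fEp (X : rat) : rat := 3 * X^+2 - 54 * X - 984.

Lemma chord_on X1 Y1 X2 Y2 : Y1^+2 = fE X1 -> Y2^+2 = fE X2 -> X1 != X2 ->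
  let l := (Y1 + Y2) / (X1 - X2) in
  (Y1 + l * ((l^+2 + 27 - X1 - X2) - X1))^+2 = fE (l^+2 + 27 - X1 - X2).
Proof.
move=> h1 h2 hne l.
pose e := fun x => fE x - (Y1 + l*(x-X1))^+2 - (x-X1)*(x-X2)*(x-(l^+2+27-X1-X2)).
have key : forall x, e x * (X2 - X1) = e X1 * (X2 - x) + e X2 * (x - X1).
  by move=> x; rewrite /e /fE; ring.
have d0 : X1 - X2 != 0 by rewrite subr_eq0.
have hl : l * (X2 - X1) = - (Y1 + Y2) by rewrite /l; field.
clearbody l.
have e1 : e X1 = 0 by rewrite /e -h1; ring.
have e2 : e X2 = 0 by rewrite /e hl -h2; ring.
set X3 := l^+2 + 27 - X1 - X2.
have := key X3; rewrite e1 e2 !mul0r addr0 => /eqP.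
have hne' : X2 - X1 != 0 by rewrite subr_eq0 eq_sym.
rewrite mulf_eq0 (negbTE hne') orbF => /eqP h3.
have : fE X3 - (Y1 + l * (X3 - X1)) ^+ 2 = e X3 by rewrite /e /X3; ring.
by rewrite h3 => /eqP; rewrite subr_eq0 => /eqP ->.
Qed.

Lemma dbl_on X Y : Y^+2 = fE X -> Y != 0 ->
  let l := fEp X / (2 * Y) in
  (Y + l*((l^+2 + 27 - 2 * X) - X))^+2 = fE (l^+2 + 27 - 2 * X).
Proof.
move=> h hY l.
pose e := fun x => fE x - (Y + l*(x-X))^+2 - (x-X)^+2*(x-(l^+2+27-2 * X)).
have key : forall x, e x = e X + (x - X) * (fEp X - 2 * l * Y).
  by move=> x; rewrite /e /fE /fEp; ring.
have hl : fEp X - 2 * l * Y = 0 by rewrite /l; field.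
clearbody l.
have e1 : e X = 0 by rewrite /e -h; ring.
set X3 := l^+2 + 27 - 2 * X.
have h3 := key X3; rewrite e1 hl mulr0 addr0 in h3.
have : fE X3 - (Y + l * (X3 - X)) ^+ 2 = e X3 by rewrite /e /X3; ring.
by rewrite h3 => /eqP; rewrite subr_eq0 => /eqP ->.
Qed.

Definition oddz (p : int) := exists u : int, p = 2 * u + 1.
Lemma oddzM a b : oddz a -> oddz b -> oddz (a * b).
Proof. by move=> [u ->] [v ->]; exists (2 * u * v + u + v); ring. Qed.
Arguments oddzM {a b}.
Lemma oddzD2 a b : oddz a -> oddz (a + 2 * b).
Proof. by move=> [u ->]; exists (u + b); ring. Qed.
Lemma oddzX a n : oddz a -> oddz (a ^+ n).
Proof.
move=> ha; elim: n => [|n IH]; first by exists 0; rewrite expr0; ring.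
by rewrite exprS; apply: oddzM.
Qed.
Lemma oddz_neq0 a : oddz a -> a != 0.
Proof. by move=> [u ->]; apply/eqP; lia. Qed.

Definition N4z (p d : int) : int :=
  p^+4 + 1968 * p^+2 * d^+2 - 160 * 1333 * p * d^+3 + 144 * 7 * 11 * 347 * d^+4.
Definition F3z (p d : int) : int :=
  p^+3 - 27 * p^+2 * d - 984 * p * d^+2 + 20 * 1333 * d^+3.
Definition N4 (X : rat) : rat := X^+4 + 1968 * X^+2 - 160 * 1333 * X + 144 * 7 * 11 * 347.

Definition F3r (P D : rat) : rat :=
  P^+3 - 27 * P^+2 * D - 984 * P * D^+2 + 20 * 1333 * D^+3.
Definition N4r (P D : rat) : rat :=
  P^+4 + 1968 * P^+2 * D^+2 - 160 * 1333 * P * D^+3 + 144 * 7 * 11 * 347 * D^+4.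
Lemma F3zE p d : (F3z p d)%:~R = F3r p%:~R d%:~R.
Proof. by rewrite /F3z /F3r; ring. Qed.
Lemma N4zE p d : (N4z p d)%:~R = N4r p%:~R d%:~R.
Proof. by rewrite /N4z /N4r; ring. Qed.
Lemma fE_frac P D : D != 0 -> fE (P / D) = F3r P D / D ^+ 3.
Proof. by move=> h; rewrite /fE /F3r; field. Qed.
Lemma N4_frac P D : D != 0 -> F3r P D != 0 ->
  N4 (P / D) / (4 * fE (P / D)) = N4r P D / (4 * D * F3r P D).
Proof. by move=> h1 h2; rewrite fE_frac // /N4 /N4r; field; rewrite h1 h2. Qed.

Lemma X_step p q k : oddz p -> oddz q -> (0 < k)%N ->
  let X := p%:~R / (q * 4 ^+ k)%:~R : rat in
  [/\ fE X != 0, oddz (N4z p (q * 4 ^+ k)), oddz (q * F3z p (q * 4 ^+ k)) &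
   N4 X / (4 * fE X) = (N4z p (q * 4 ^+ k))%:~R / ((q * F3z p (q * 4 ^+ k)) * 4 ^+ k.+1)%:~R].
Proof.
move=> hp hq; case: k => [//|k] _ X.
have hD : q * 4 ^+ k.+1 = 2 * (2 * q * 4 ^+ k) by rewrite exprS; ring.
have oN : oddz (N4z p (q * 4 ^+ k.+1)).
  move: (q * 4 ^+ k.+1) hD => D hD.
  have -> : N4z p D = p ^+ 4 + D *
    (1968 * p^+2 * D - 160 * 1333 * p * D^+2 + 144 * 7 * 11 * 347 * D^+3).
    by rewrite /N4z; ring.
  by rewrite {1}hD -mulrA; apply: oddzD2; apply: oddzX.
have oF : oddz (F3z p (q * 4 ^+ k.+1)).
  move: (q * 4 ^+ k.+1) hD => D hD.
  have -> : F3z p D = p ^+ 3 + D *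
    (- 27 * p^+2 - 984 * p * D + 20 * 1333 * D^+2).
    by rewrite /F3z; ring.
  by rewrite {1}hD -mulrA; apply: oddzD2; apply: oddzX.
have D0 : ((q * 4 ^+ k.+1)%:~R : rat) != 0.
  by rewrite intr_eq0; apply: mulf_neq0; [exact: oddz_neq0 | exact: expf_neq0].
have F0 : F3r p%:~R (q * 4 ^+ k.+1)%:~R != 0 by rewrite -F3zE intr_eq0 oddz_neq0.
have f0 : fE X != 0 by rewrite /X fE_frac // mulf_neq0 // invr_neq0 // expf_eq0.
split => //; first by apply: oddzM.
rewrite /X (N4_frac _ _ D0 F0) N4zE.
congr (_ / _).
have -> : q * F3z p (q * 4 ^+ k.+1) * 4 ^+ k.+2 = 4 * (q * 4 ^+ k.+1) * F3z p (q * 4 ^+ k.+1).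
  by rewrite (exprS _ k.+1); ring.
by rewrite -F3zE; ring.
Qed.

Fixpoint sq (n : nat) : int * int * nat :=
  if n is n'.+1 then
    let: (p, q, k) := sq n' in (N4z p (q * 4 ^+ k), q * F3z p (q * 4 ^+ k), k.+1)
  else (6121, 1, 2%N).
Definition Xs n : rat := let: (p, q, k) := sq n in p%:~R / (q * 4 ^+ k)%:~R.

Lemma sq_inv n : let: (p, q, k) := sq n in [/\ oddz p, oddz q & k = n.+2].
Proof.
elim: n => [|n]; first by split => //; [exists 3060 | exists 0].
rewrite /=; case: (sq n) => [[p q] k] [hp hq ->].
by have [_ ? ? _] := @X_step p q n.+2 hp hq isT.
Qed.

Lemma Xs_step n : fE (Xs n) != 0 /\ Xs n.+1 = N4 (Xs n) / (4 * fE (Xs n)).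
Proof.
have := sq_inv n; rewrite /Xs /=; case: (sq n) => [[p q] k] [hp hq ->].
by have [? _ _ ->] := @X_step p q n.+2 hp hq isT.
Qed.

Lemma N4_id X : fEp X ^+ 2 + 4 * fE X * (27 - 2 * X) = N4 X.
Proof. by rewrite /fEp /fE /N4; ring. Qed.
Lemma N4_id2 X : N4 X - 4 * 31 * fE X = ((X - 31) ^+ 2 - 225) ^+ 2.
Proof. by rewrite /fE /N4; ring. Qed.

Lemma Xs_on n : exists Y, Y^+2 = fE (Xs n) /\ 31 <= Xs n.
Proof.
elim: n => [|n [Y [hY h31]]].
  exists ((5^+3 * 9 * 409) / 64); rewrite /Xs /=; split.
    by rewrite /fE; field.
  rewrite -pmulrn mul1r rmorphXn /= -pmulrn.
  rewrite ler_pdivlMr; last by rewrite exprn_gt0.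
  lra.
have [f0 ->] := Xs_step n.
set X := Xs n in hY h31 f0 *.
have Y0 : Y != 0 by apply: contra f0 => /eqP Y0; rewrite -hY Y0 expr0n.
have hd := @dbl_on X Y hY Y0.
set l := fEp X / (2 * Y) in hd.
have hl : l ^+ 2 = fEp X ^+ 2 / (4 * fE X).
  by rewrite /l expr_div_n exprMn hY; congr (_ / (_ * _)); ring.
clearbody l.
have e : l ^+ 2 + 27 - 2 * X = N4 X / (4 * fE X).
  rewrite hl -N4_id; move: (fE X) (fEp X) f0 => F G F0; by field.
exists (Y + l * (l ^+ 2 + 27 - 2 * X - X)); split; first by rewrite -e.
have fpos : 0 < fE X by rewrite -hY lt_def sqrf_eq0 Y0 sqr_ge0.
have e2 : N4 X / (4 * fE X) - 31 = ((X - 31) ^+ 2 - 225) ^+ 2 / (4 * fE X).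
  rewrite -N4_id2; move: (fE X) (N4 X) f0 => F G F0; by field.
rewrite -subr_ge0 e2; apply: divr_ge0; first exact: sqr_ge0.
by apply: mulr_ge0 => //; apply: ltW.
Qed.

Lemma Xs_inj n m : Xs n = Xs m -> n = m.
Proof.
rewrite /Xs; have := sq_inv n; case: (sq n) => [[p q] k] [hp hq ->].
have := sq_inv m; case: (sq m) => [[p' q'] k'] [hp' hq' ->] e.
have nz : forall (a : int) j, oddz a -> ((a * 4 ^+ j)%:~R : rat) != 0.
  by move=> a j ha; rewrite intr_eq0; apply: mulf_neq0; [exact: oddz_neq0 | exact: expf_neq0].
move/eqP: e; rewrite eqr_div ?nz // -!intrM => /eqP /intr_inj e.
have key : forall a b c d (i j : nat), oddz a -> oddz b -> oddz c -> oddz d ->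
    (i < j)%N -> a * (b * 4 ^+ j) <> c * (d * 4 ^+ i).
  move=> a b c d i j ha hb hc hd lij.
  rewrite -(subnKC lij) exprD.
  case: (j - i.+1)%N => [|d'] eq.
  - have [v hv] := oddzM hc hd.
    have : (a * b * 4) * 4 ^+ i = (c * d) * 4 ^+ i.
      transitivity (a * (b * (4 ^+ i.+1 * 4 ^+ 0))); first by rewrite exprS expr0; ring.
      by rewrite eq; ring.
    move/mulIf; rewrite expf_neq0 // => /(_ isT); rewrite hv.
    rewrite (_ : a * b * 4 = 2 * (a * b * 2)); last by ring.
    move: (a * b * 2) => z; lia.
  - have [v hv] := oddzM hc hd.
    have : (a * b * 4 * 4 ^+ d'.+1) * 4 ^+ i = (c * d) * 4 ^+ i.
      transitivity (a * (b * (4 ^+ i.+1 * 4 ^+ d'.+1))); first by rewrite (exprS _ i); ring.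
      by rewrite eq; ring.
    move/mulIf; rewrite expf_neq0 // => /(_ isT); rewrite hv.
    rewrite (_ : a * b * 4 * 4 ^+ d'.+1 = 2 * (a * b * 2 * 4 ^+ d'.+1)); last by ring.
    move: (a * b * 2 * 4 ^+ d'.+1) => z; lia.
case: (ltngtP n m) => [lt|lt|-> //].
- by exfalso; apply: (key p q' p' q n.+2 m.+2).
- by exfalso; apply: (key p' q p q' m.+2 n.+2) => //; rewrite e.
Qed.


Lemma est (a b d l g dl B1 : rat) : 0 <= a -> 0 <= b -> d != 0 -> l * d = a + b ->
  a ^+ 2 - b ^+ 2 = d * g -> 225 <= g -> `|d| < dl -> dl * (3 * B1) = 225 -> 3 * B1 < l ^+ 2.
Proof.
move=> ha hb d0 hl hg g225 hdl hB.
have s1 : 0 <= (a + b) ^+ 2 - (a ^+ 2 - b ^+ 2).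
  have -> : (a + b) ^+ 2 - (a ^+ 2 - b ^+ 2) = 2 * (b * (a + b)) by ring.
  apply: mulr_ge0; first by []. apply: mulr_ge0; [assumption | by apply: addr_ge0].
have s2 : 0 <= (a + b) ^+ 2 + (a ^+ 2 - b ^+ 2).
  have -> : (a + b) ^+ 2 + (a ^+ 2 - b ^+ 2) = 2 * (a * (a + b)) by ring.
  apply: mulr_ge0; first by []. apply: mulr_ge0; [assumption | by apply: addr_ge0].
have hsq : (a + b) ^+ 2 = (l ^+ 2 * `|d|) * `|d|.
  by rewrite -hl exprMn -mulrA -expr2 (real_normK (num_real d)).
have dp : 0 < `|d| by rewrite normr_gt0.
have main : 225 <= l ^+ 2 * `|d|.
  rewrite -(ler_pM2r dp) -hsq.
  have [dpos|dneg] : 0 < d \/ d < 0.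
    by move: d0; rewrite neq_lt => /orP [h|h]; [right|left].
  - rewrite (gtr0_norm dpos).
    have : 225 * d <= d * g by rewrite mulrC ler_pM2l.
    lra.
  - rewrite (ltr0_norm dneg).
    have : 225 * (- d) <= (- d) * g.
      rewrite mulrC ler_pM2l; first exact: g225.
      by rewrite oppr_gt0.
    lra.
have L0 : 0 <= l ^+ 2 by apply: sqr_ge0.
have lp : 0 < l ^+ 2.
  have : 0 < l ^+ 2 * `|d| by lra.
  by rewrite pmulr_lgt0.
have : 225 < l ^+ 2 * dl.
  have : l ^+ 2 * `|d| < l ^+ 2 * dl by rewrite ltr_pM2l.
  lra.
have dlp : 0 < dl by apply: le_lt_trans hdl.
by rewrite -hB mulrC ltr_pM2r.
Qed.

Lemma g225 X1 X2 : 31 <= X1 -> 31 <= X2 ->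
  225 <= X1 ^+ 2 + X1 * X2 + X2 ^+ 2 - 27 * (X1 + X2) - 984 :> rat.
Proof. move=> h1 h2; nra. Qed.

Lemma bigX (B : rat) : exists X Y, Y ^+ 2 = fE X /\ B < X.
Proof.
pose B1 := `|B| + 31.
have B1p : 0 < B1 by rewrite /B1; have := normr_ge0 B; lra.
have BB1 : B <= B1 by rewrite /B1; have := ler_norm B; lra.
have B131 : 31 <= B1 by rewrite /B1; have := normr_ge0 B; lra.
pose dl := 225 / (3 * B1).
have dlp : 0 < dl by rewrite /dl divr_gt0 // mulr_gt0.
have h3 : 3 * B1 != 0 by apply: mulf_neq0; [by [] | by rewrite gt_eqF].
have hdl : dl * (3 * B1) = 225 by rewrite /dl divfK.
clearbody dl B1.
pose K := Num.truncn ((B1 - 31) / dl).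
case: (boolP [exists i : 'I_K.+2, B1 < Xs i]).
  move=> /existsP [i hi]; have [Y [hY _]] := Xs_on i.
  by exists (Xs i), Y; split; [exact: hY | exact: le_lt_trans BB1 hi].
move=> /existsPn hall.
have hle : forall i : 'I_K.+2, Xs i <= B1 by move=> i; rewrite leNgt; apply: hall.
pose bk := fun i : 'I_K.+2 => Num.truncn ((Xs i - 31) / dl).
have bkK : forall i, (bk i < K.+1)%N.
  move=> i; rewrite ltnS /bk /K; apply: Num.Theory.le_truncn.
  rewrite ler_pM2r; last by rewrite invr_gt0.
  by rewrite lerD2r; apply: hle.
pose g := fun i : 'I_K.+2 => (inord (bk i) : 'I_K.+1).
case: (boolP (injectiveb g)) => [/injectiveP ginj | /injectivePn [i [j nij eqg]]].
  by have := leq_card _ ginj; rewrite !card_ord ltnn.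
have ebk : bk i = bk j.
  by move: eqg => /(congr1 val); rewrite /g /= !inordK ?bkK.
have [Yi [hYi hi31]] := Xs_on i.
have [Yj [hYj hj31]] := Xs_on j.
have ui : forall k : 'I_K.+2, 31 <= Xs k -> (bk k)%:R <= (Xs k - 31) / dl < (bk k).+1%:R.
  move=> k hk; apply: Num.Theory.truncn_itv.
  apply: divr_ge0; [by rewrite subr_ge0 | exact: ltW].
have /andP [ui1 ui2] := ui i hi31.
have /andP [uj1 uj2] := ui j hj31.
rewrite ebk in ui1 ui2.
have hd : `|Xs i - Xs j| < dl.
  have dl0 : dl != 0 by rewrite gt_eqF.
  have -> : Xs i - Xs j = dl * ((Xs i - 31) / dl - (Xs j - 31) / dl).
    by move: (Xs i) (Xs j) dl0 => x y h; field.
  move: ui1 ui2 uj1 uj2.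
  move: ((Xs i - 31) / dl) ((Xs j - 31) / dl) => u v k1 k2 k3 k4.
  rewrite normrM (gtr0_norm dlp) -[X in _ < X]mulr1 ltr_pM2l; last exact: dlp.
  rewrite ltr_norml; clear -k1 k2 k3 k4; apply/andP; split; lra.
have hne : Xs i != Xs j.
  apply/eqP => /Xs_inj h; move: nij; have -> : i = j by apply: val_inj.
  by rewrite eqxx.
pose a := `|Yi|; pose b := `|Yj|.
have ha : a ^+ 2 = fE (Xs i) by rewrite /a real_normK ?num_real.
have hb : b ^+ 2 = fE (Xs j) by rewrite /b real_normK ?num_real.
have hc := @chord_on (Xs i) a (Xs j) b ha hb hne.
move: hc; set l := (a + b) / (Xs i - Xs j) => hc.
have hest : 3 * B1 < l ^+ 2.
  apply: (@est a b (Xs i - Xs j) l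
    (Xs i ^+ 2 + Xs i * Xs j + Xs j ^+ 2 - 27 * (Xs i + Xs j) - 984) dl B1).
  - exact: normr_ge0.
  - exact: normr_ge0.
  - by rewrite subr_eq0.
  - by rewrite /l divfK ?subr_eq0.
  - by rewrite ha hb /fE; ring.
  - exact: g225.
  - exact: hd.
  - exact: hdl.
exists (l ^+ 2 + 27 - Xs i - Xs j), (a + l * (l ^+ 2 + 27 - Xs i - Xs j - Xs i)).
split; first exact: hc.
have h1 := hle i; have h2 := hle j; clear -hest h1 h2 BB1; lra.
Qed.


Lemma good_of (r W Z : rat) : 1 < r -> W ^+ 2 = 4 * r ^+ 2 + r + 1 ->
  Z ^+ 2 = r ^+ 2 + r + 4 -> good_ratio r.
Proof.
move=> r1 hW hZ.
pose y := fun i : 'I_4 => match nat_of_ord i with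
  | 1%N => (r - 1) * (2 * r + 1) * Z / 3
  | 2%N => (r - 1) * (r + 2) * W / 3
  | _ => 2 * (r ^+ 3 - 1) / 3 end.
exists ((1 + r ^+ 3) / 2), (5 * (r ^+ 3 - 1) / 6), (fun i : 'I_4 => r ^+ nat_of_ord i), y.
have r3 : 1 < r ^+ 3 by rewrite exprn_egt1.
have rp : 0 < r by apply: lt_trans r1.
have Z0 : Z != 0.
  apply/eqP => Z0; move: hZ; rewrite Z0 expr0n /= => h.
  have : 0 < r ^+ 2 + r + 4 by have := sqr_ge0 r; lra.
  by rewrite -h ltxx.
have W0 : W != 0.
  apply/eqP => W0; move: hW; rewrite W0 expr0n /= => h.
  have : 0 < 4 * r ^+ 2 + r + 1 by have := sqr_ge0 r; lra.
  by rewrite -h ltxx.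
have r10 : r - 1 != 0 by rewrite subr_eq0 gt_eqF.
split; first by apply: divr_gt0; [apply: mulr_gt0; [by [] | by rewrite subr_gt0] | by []].
split.
  case=> [[|[|[|[|n]]]] Hn] //; rewrite /on_circle /y /=.
  - by rewrite expr0; field.
  - rewrite expr1 !exprMn_comm ?hZ; try exact: mulrC.
    by field.
  - rewrite !exprMn_comm ?hW; try exact: mulrC.
    by field.
  - by field.
split.
  case=> [[|[|[|[|n]]]] Hn] //; rewrite /y /=.
  - apply: mulf_neq0; last by rewrite invr_neq0.
    apply: mulf_neq0; first by []. by rewrite subr_eq0 gt_eqF.
  - apply: mulf_neq0; last by rewrite invr_neq0.
    apply: mulf_neq0; last exact: Z0.
    apply: mulf_neq0; first exact: r10.
    rewrite gt_eqF //; lra.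
  - apply: mulf_neq0; last by rewrite invr_neq0.
    apply: mulf_neq0; last exact: W0.
    apply: mulf_neq0; first exact: r10.
    rewrite gt_eqF //; lra.
  - apply: mulf_neq0; last by rewrite invr_neq0.
    apply: mulf_neq0; first by []. by rewrite subr_eq0 gt_eqF.
split; first by move=> i; apply: exprn_gt0.
split.
  case=> [[|[|[|[|n]]]] Hn] //= _; rewrite inordK //=; by rewrite exprS.
split; first by rewrite inordK //; field.
by rewrite /y inordK.
Qed.

Definition Qt (t : rat) := 4 * t ^+ 4 - 2 * t ^+ 3 - 27 * t ^+ 2 + 4 * t + 61.

Lemma quartic_pt X Y : Y ^+ 2 = fE X -> 4 * X != 109 ->
  let t := (2 * Y - X + 16) / (2 * (109 - 4 * X)) in
  (- X / 4 + 2 * t ^+ 2 - t / 2) ^+ 2 = Qt t.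
Proof.
move=> hY hX t.
have d0 : 109 - 4 * X != 0 by rewrite subr_eq0 eq_sym.
pose s := - X / 4; pose A := 4 * s + 109 / 4.
have A0 : A != 0.
  rewrite /A /s; apply: contra d0 => /eqP h; apply/eqP.
  have -> : 109 - 4 * X = 4 * (4 * (- X / 4) + 109 / 4) by field.
  by rewrite h mulr0.
have e1 : 2 * A * t - (s + 4) = Y / 2.
  by rewrite /A /s /t; field.
clearbody t.
have e2 : 4 * A * (A * t ^+ 2 - (s + 4) * t + s ^+ 2 - 61) =
          (2 * A * t - (s + 4)) ^+ 2 - ((s + 4) ^+ 2 - 4 * A * (s ^+ 2 - 61)) by ring.
have e3 : (2 * A * t - (s + 4)) ^+ 2 - ((s + 4) ^+ 2 - 4 * A * (s ^+ 2 - 61)) = 0.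
  by rewrite e1 expr_div_n hY /fE /A /s; field.
have e4 : A * t ^+ 2 - (s + 4) * t + s ^+ 2 - 61 = 0.
  move: e2; rewrite e3 => /eqP; rewrite mulf_eq0 mulf_eq0 (negbTE A0) orbF => /orP [|/eqP //].
  by [].
have e5 : (- X / 4 + 2 * t ^+ 2 - t / 2) ^+ 2 - Qt t = A * t ^+ 2 - (s + 4) * t + s ^+ 2 - 61.
  by rewrite /Qt /A /s; field.
by apply/eqP; rewrite -subr_eq0 e5 e4.
Qed.

Lemma from_t (t M : rat) Yq : 0 <= M -> t <= - (2 * M + 6) -> Yq ^+ 2 = Qt t ->
  exists rho, M < rho /\ good_ratio rho.
Proof.
move=> M0 ht hq.
have d : 0 < 1 - 2 * t by lra.
have d0 : 1 - 2 * t != 0 by rewrite gt_eqF.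
pose rho := (t ^+ 2 - 4) / (1 - 2 * t).
have hr : - t / 2 - 1 <= rho.
  rewrite /rho ler_pdivlMr //.
  have : 0 <= - 3 - 3 * t / 2 by lra.
  have -> : (- t / 2 - 1) * (1 - 2 * t) = t ^+ 2 - 4 - (- 3 - 3 * t / 2) by field.
  lra.
exists rho; split; first by lra.
apply: (@good_of rho (Yq / (1 - 2 * t)) ((- t ^+ 2 + t - 4) / (1 - 2 * t))).
- by lra.
- by rewrite expr_div_n hq /rho /Qt; field.
- by rewrite /rho; field.
Qed.

Lemma from_point X Y M : 0 <= M -> Y ^+ 2 = fE X ->
  1011 + (1 + 8 * (2 * M + 6)) ^+ 2 < X -> exists rho, M < rho /\ good_ratio rho.
Proof.
move=> M0 hY hX.
pose c := 1 + 8 * (2 * M + 6).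
have c0 : 0 < c by rewrite /c; lra.
have c2 : 0 <= c ^+ 2 by apply: sqr_ge0.
have X1 : 1011 + c ^+ 2 < X by [].
have Xp : 1 <= X by lra.
pose Y' := `|Y|.
have hY' : Y' ^+ 2 = fE X by rewrite /Y' (real_normK (num_real Y)).
have Y0 : 0 <= Y' by apply: normr_ge0.
clearbody Y'.
have f1 : X ^+ 2 * (X - 1011) <= fE X.
  have : 0 <= X * (X - 1) by apply: mulr_ge0; lra.
  rewrite /fE; lra.
have f2 : c ^+ 2 * X ^+ 2 < X ^+ 2 * (X - 1011).
  rewrite mulrC ltr_pM2l; first by lra.
  by apply: exprn_gt0; lra.
have hc : c * X <= 2 * Y'.
  rewrite leNgt; apply/negP => h.
  have : 0 < (c * X - 2 * Y') * (c * X + 2 * Y').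
    apply: mulr_gt0; first by lra.
    have : 0 < c * X by apply: mulr_gt0; lra.
    lra.
  have : 0 <= Y' ^+ 2 by apply: sqr_ge0.
  lra.
have h109 : 109 < 4 * X by lra.
have X109 : 4 * X != 109 by rewrite (gt_eqF h109).
have hq := @quartic_pt X Y' hY' X109.
move: hq; set t := (2 * Y' - X + 16) / (2 * (109 - 4 * X)) => hq.
apply: (@from_t t M _ M0 _ hq).
have dn : 2 * (109 - 4 * X) < 0 by lra.
have dn0 : 2 * (109 - 4 * X) != 0 by rewrite (lt_eqF dn).
have ht : t * (2 * (109 - 4 * X)) = 2 * Y' - X + 16 by rewrite /t (divfK dn0).
rewrite leNgt; apply/negP => h.
have : 0 < (t + (2 * M + 6)) * (- (2 * (109 - 4 * X))).
  by apply: mulr_gt0; lra.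
have : c * X = X + 8 * (2 * M + 6) * X by rewrite /c; ring.
nra.
Qed.

Lemma sum_bound (s : seq rat) x : x \in s -> x <= \sum_(y <- s) `|y|.
Proof.
elim: s => [//|z s IH]; rewrite inE big_cons => /orP [/eqP ->|hx].
  have : 0 <= \sum_(y <- s) `|y| by apply: sumr_ge0 => i _; apply: normr_ge0.
  have := ler_norm z; lra.
have := IH hx; have := normr_ge0 z; lra.
Qed.

Theorem mainTheorem4 :
  forall s : seq rat, exists r : rat, r \notin s /\ 1 < r /\ good_ratio r.
Proof.
move=> s.
pose M := 1 + \sum_(y <- s) `|y|.
have M0 : 0 <= M.
  have : 0 <= \sum_(y <- s) `|y| by apply: sumr_ge0 => i _; apply: normr_ge0.
  rewrite /M; lra.
have [X [Y [hY hX]]] := bigX (1011 + (1 + 8 * (2 * M + 6)) ^+ 2).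
have [rho [hM hg]] := @from_point X Y M M0 hY hX.
exists rho; split; last split.
- apply/negP => /sum_bound h; move: hM; rewrite /M; lra.
- move: hM; rewrite /M; have : 0 <= \sum_(y <- s) `|y| by apply: sumr_ge0 => i _; apply: normr_ge0.
  lra.
- exact: hg.
Qed.
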